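(* Let $n\ge2$, $q=2^m$, and let $\mathbf{H}_X^{(q)}$ be a $q$-ary labeling of the toric Tanner graph $\mathcal{G}_X$ (as defined in the context) with code $\mathcal{C}_X^{(q)}$. If every cycle of the labeled graph $\mathcal{G}_X$ has product $1$, then $\dim_{\mathbb{F}_q}\mathcal{C}_X^{(q)}=n^2+1$.
   Context: Indices are taken in $\mathbb{Z}_{2n}=\{0,\dots,2n-1\}$ with arithmetic mod $2n$. Variable nodes: $V=\{(i,j)\in\mathbb{Z}_{2n}^2: i+j\text{ even}\}$ ($2n^2$ nodes). $X$-check nodes: $C_X=\{(i,j): i\text{ odd}, j\text{ even}\}$ ($n^2$ nodes). Each check node $(i,j)$ is adjacent to the four variable nodes $(i\pm1,j)$, $(i,j\pm1)$; $\mathcal{G}_X$ is the resulting bipartite graph on $V\cup C_X$. A $q$-ary labeling is a matrix $\mathbf{H}_X^{(q)}=(x_{c,v})\in\mathbb{F}_q^{C_X\times V}$ with $x_{c,v}\neq0$ iff $c$ and $v$ are adjacent; the label of edge $(c,v)$ is $x_{c,v}$. $\mathcal{C}_X^{(q)}=\{w\in\mathbb{F}_q^V:\mathbf{H}_X^{(q)}w=0\}$. For a cycle $v_1,c_1,v_2,\dots,v_k,c_k,v_1$ its product is $\prod_{t=1}^k x_{c_t v_{t+1}}x_{c_t v_t}^{-1}$ (indices of $v$ mod $k$). *)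

(* Defs.v *)
From HB Require Import structures.
From mathcomp Require Import all_boot all_order all_algebra.
Set Implicit Arguments. Unset Strict Implicit. Unset Printing Implicit Defensive.
Import GRing.Theory.
Local Open Scope ring_scope.

(* Grid points of Z_{2n} x Z_{2n}, coordinates as ordinals < 2n (arithmetic mod 2n). *)
Definition grid (n : nat) := ('I_(2 * n) * 'I_(2 * n))%type.

Definition is_var (n : nat) (p : grid n) : bool := ~~ odd (p.1 + p.2)%N.
Definition is_xcheck (n : nat) (p : grid n) : bool := odd p.1 && ~~ odd p.2.

Definition Vnode (n : nat) := {p : grid n | is_var p}.
Definition Cnode (n : nat) := {p : grid n | is_xcheck p}.
HB.instance Definition _ n := Finite.on (Vnode n).
HB.instance Definition _ n := Finite.on (Cnode n).

Definition pm1 (N a b : nat) : bool :=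
  (a == (b + 1) %% N)%N || (a == (b + N - 1) %% N)%N.

Definition adj (n : nat) (c : Cnode n) (v : Vnode n) : bool :=
  let: (ci, cj) := val c in
  let: (vi, vj) := val v in
  (pm1 (2 * n) vi ci && (vj == cj :> nat)) ||
  ((vi == ci :> nat) && pm1 (2 * n) vj cj).

Definition is_labeling (F : fieldType) (n : nat) (x : Cnode n -> Vnode n -> F) : Prop :=
  forall c v, (x c v != 0) = adj c v.

(* A cycle v_1,c_1,v_2,...,v_k,c_k,v_1 in G_X (k >= 2, distinct nodes),
   with v_{t+1} taken cyclically (ordS). *)
Definition is_cycle (n k : nat) (vs : 'I_k -> Vnode n) (cs : 'I_k -> Cnode n) : Prop :=
  [/\ (2 <= k)%N, injective vs, injective cs &
      forall t : 'I_k, adj (cs t) (vs t) && adj (cs t) (vs (ordS t))].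

Definition cycle_product (F : fieldType) (n k : nat) (x : Cnode n -> Vnode n -> F)
  (vs : 'I_k -> Vnode n) (cs : 'I_k -> Cnode n) : F :=
  \prod_(t < k) (x (cs t) (vs (ordS t)) / x (cs t) (vs t)).

Definition syndrome (F : fieldType) (n : nat) (x : Cnode n -> Vnode n -> F)
  (w : {ffun Vnode n -> F^o}) : {ffun Cnode n -> F^o} :=
  [ffun c => \sum_(v : Vnode n) x c v * w v].

Definition codeX (F : fieldType) (n : nat) (x : Cnode n -> Vnode n -> F)
  : {vspace {ffun Vnode n -> F^o}} :=
  lker (linfun (syndrome x)).

(* Main.v *)
Require Import Defs.
From HB Require Import structures.
From mathcomp Require Import all_boot all_order all_algebra.
From mathcomp Require Import all_field zify ring.
Set Implicit Arguments. Unset Strict Implicit. Unset Printing Implicit Defensive.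
Import GRing.Theory.

Section Geo.
Variable n : nat.
Local Notation N := n.+2.
Local Notation M := (2 * n.+2).

Lemma M_pos : (0 < M)%N. Proof. by rewrite muln_gt0. Qed.
Definition gi (k : nat) : 'I_M := Ordinal (ltn_pmod k M_pos).
Arguments gi : simpl never.
Lemma gi_small k : (k < M)%N -> (gi k : nat) = k.
Proof. by move=> h; rewrite /gi /= modn_small. Qed.

Lemma modN_lt a : (a %% N < N)%N. Proof. exact: ltn_pmod. Qed.

Fact chk_proof a b : is_xcheck (gi (2 * (a %% N)).+1, gi (2 * (b %% N))).
Proof.
move: (modN_lt a) (modN_lt b); move: (a %% N) (b %% N) => a' b' ha hb.
rewrite /is_xcheck /= !modn_small; lia.
Qed.
Definition chk a b : Cnode N := exist _ (gi (2 * (a %% N)).+1, gi (2 * (b %% N))) (chk_proof a b).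

Fact hv_proof a b : is_var (gi (2 * (a %% N)), gi (2 * (b %% N))).
Proof.
move: (modN_lt a) (modN_lt b); move: (a %% N) (b %% N) => a' b' ha hb.
rewrite /is_var /= !modn_small; lia.
Qed.
Definition hv a b : Vnode N := exist _ (gi (2 * (a %% N)), gi (2 * (b %% N))) (hv_proof a b).

Fact ev_proof a b : is_var (gi (2 * (a %% N)).+1, gi (2 * (b %% N)).+1).
Proof.
move: (modN_lt a) (modN_lt b); move: (a %% N) (b %% N) => a' b' ha hb.
rewrite /is_var /= !modn_small; lia.
Qed.
Definition ev a b : Vnode N := exist _ (gi (2 * (a %% N)).+1, gi (2 * (b %% N)).+1) (ev_proof a b).

Lemma chk_c a b : ((val (chk a b)).1 : nat) = (2 * (a %% N)).+1 /\ ((val (chk a b)).2 : nat) = 2 * (b %% N).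
Proof.
rewrite /=; move: (modN_lt a) (modN_lt b); move: (a %% N) (b %% N) => a' b' ha hb; rewrite !modn_small; lia.
Qed.
Lemma hv_c a b : ((val (hv a b)).1 : nat) = 2 * (a %% N) /\ ((val (hv a b)).2 : nat) = 2 * (b %% N).
Proof.
rewrite /=; move: (modN_lt a) (modN_lt b); move: (a %% N) (b %% N) => a' b' ha hb; rewrite !modn_small; lia.
Qed.
Lemma ev_c a b : ((val (ev a b)).1 : nat) = (2 * (a %% N)).+1 /\ ((val (ev a b)).2 : nat) = (2 * (b %% N)).+1.
Proof.
rewrite /=; move: (modN_lt a) (modN_lt b); move: (a %% N) (b %% N) => a' b' ha hb; rewrite !modn_small; lia.
Qed.

Lemma chk_mod a b a' b' : a %% N = a' %% N -> b %% N = b' %% N -> chk a b = chk a' b'.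
Proof. by move=> ha hb; apply: val_inj; rewrite /= ha hb. Qed.
Lemma hv_mod a b a' b' : a %% N = a' %% N -> b %% N = b' %% N -> hv a b = hv a' b'.
Proof. by move=> ha hb; apply: val_inj; rewrite /= ha hb. Qed.
Lemma ev_mod a b a' b' : a %% N = a' %% N -> b %% N = b' %% N -> ev a b = ev a' b'.
Proof. by move=> ha hb; apply: val_inj; rewrite /= ha hb. Qed.

Lemma Cnode_eq (c c' : Cnode N) : ((val c).1 : nat) = (val c').1 -> ((val c).2 : nat) = (val c').2 -> c = c'.
Proof.
case: c => [[i j] ?]; case: c' => [[i' j'] ?] /= h1 h2; apply: val_inj => /=.
by congr pair; apply: val_inj.
Qed.
Lemma Vnode_eq (c c' : Vnode N) : ((val c).1 : nat) = (val c').1 -> ((val c).2 : nat) = (val c').2 -> c = c'.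
Proof.
case: c => [[i j] ?]; case: c' => [[i' j'] ?] /= h1 h2; apply: val_inj => /=.
by congr pair; apply: val_inj.
Qed.

Lemma chk_inj a b a' b' : (a < N)%N -> (b < N)%N -> (a' < N)%N -> (b' < N)%N ->
  chk a b = chk a' b' -> a = a' /\ b = b'.
Proof.
move=> ha hb ha' hb' e.
have [e1 e2] := chk_c a b; have [e1' e2'] := chk_c a' b'.
rewrite e !modn_small // in e1 e2 e1' e2'; lia.
Qed.

Lemma CnodeP (c : Cnode N) : exists a b, [/\ (a < N)%N, (b < N)%N & c = chk a b].
Proof.
case: c => [[i j] hij]; exists i./2, j./2.
have hi := ltn_ord i; have hj := ltn_ord j.
have /andP [oi ej] := hij.
have ha : (i./2 < N)%N by lia.
have hb : (j./2 < N)%N by lia.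
split => //; apply: Cnode_eq => /=; rewrite ?(modn_small ha) ?(modn_small hb) ?modn_small; lia.
Qed.

Lemma VnodeP (v : Vnode N) : exists a b, [/\ (a < N)%N, (b < N)%N & v = hv a b \/ v = ev a b].
Proof.
case: v => [[i j] hij]; exists i./2, j./2.
have hi := ltn_ord i; have hj := ltn_ord j.
have hij' : ~~ odd (i + j) := hij.
have ha : (i./2 < N)%N by lia.
have hb : (j./2 < N)%N by lia.
split => //; case: (boolP (odd i)) => oi; [right|left];
  apply: Vnode_eq => /=; rewrite ?(modn_small ha) ?(modn_small hb) ?modn_small; lia.
Qed.

Lemma adjE (c : Cnode N) (v : Vnode N) : adj c v =
  (pm1 M (val v).1 (val c).1 && ((val v).2 == (val c).2 :> nat)) ||
  (((val v).1 == (val c).1 :> nat) && pm1 M (val v).2 (val c).2).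
Proof. by case: c => [[ci cj] ?]; case: v => [[vi vj] ?]. Qed.

Lemma pm1E x y : (x < M)%N -> (y < M)%N -> pm1 M x y =
  [|| x == y.+1, (y.+1 == M) && (x == 0), x.+1 == y | (y == 0) && (x.+1 == M)].
Proof.
move=> hx hy.
have e1 : (y + 1) %% M = if y.+1 == M then 0 else y.+1.
  case: eqP => h; first by rewrite addn1 h modnn.
  rewrite modn_small; lia.
have e2 : (y + M - 1) %% M = if y == 0 then M.-1 else y.-1.
  case: eqP => h; first by subst; rewrite add0n modn_small; lia.
  have -> : (y + M - 1 = y.-1 + M)%N by lia.
  by rewrite modnDr modn_small; lia.
rewrite /pm1 e1 e2; case: ifP => h1; case: ifP => h2; apply/idP/idP; lia.
Qed.

Definition sN a := if a.+1 == N then 0 else a.+1.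
Definition pN a := if a == 0 then N.-1 else a.-1.
Lemma sN_lt a : (a < N)%N -> (sN a < N)%N. Proof. rewrite /sN; case: ifP; lia. Qed.
Lemma pN_lt a : (a < N)%N -> (pN a < N)%N. Proof. rewrite /pN; case: ifP; lia. Qed.
Lemma pN_sN a : (a < N)%N -> pN (sN a) = a.
Proof. move=> ha; rewrite /sN; case: eqP => h1; rewrite /pN /=; try case: ifP => h2; lia. Qed.
Lemma sN_pN a : (a < N)%N -> sN (pN a) = a.
Proof. move=> ha; rewrite /pN; case: eqP => h1; rewrite /sN /=; try case: ifP => h2; lia. Qed.
Lemma sN_neq a : (a < N)%N -> (sN a == a) = false.
Proof. move=> ha; rewrite /sN; case: ifP => h1; apply/negP; lia. Qed.
Lemma pN_neq a : (a < N)%N -> (pN a == a) = false.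
Proof. move=> ha; rewrite /pN; case: ifP => h1; apply/negP; lia. Qed.
Lemma sN_mod a : (a < N)%N -> a.+1 %% N = sN a.
Proof.
move=> ha; rewrite /sN; case: ifP => [/eqP ->|h]; first by rewrite modnn.
rewrite modn_small //; lia.
Qed.

Lemma pm1_eo a' a : (a' < N)%N -> (a < N)%N -> pm1 M (2 * a') (2 * a).+1 = (a' == a) || (a' == sN a).
Proof.
move=> h1 h2; rewrite pm1E; try lia.
rewrite /sN; case: ifP => h; apply/idP/idP; lia.
Qed.
Lemma pm1_oe b' b : (b' < N)%N -> (b < N)%N -> pm1 M (2 * b').+1 (2 * b) = (b' == b) || (sN b' == b).
Proof.
move=> h1 h2; rewrite pm1E; try lia.
rewrite /sN; case: ifP => h; apply/idP/idP; lia.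
Qed.
Lemma pm1_oo a' a : (a' < N)%N -> (a < N)%N -> pm1 M (2 * a').+1 (2 * a).+1 = false.
Proof. move=> h1 h2; rewrite pm1E; try lia; apply/negP; lia. Qed.

Lemma adj_hv a b a' b' : (a < N)%N -> (b < N)%N -> (a' < N)%N -> (b' < N)%N ->
  adj (chk a b) (hv a' b') = ((a' == a) || (a' == sN a)) && (b' == b).
Proof.
move=> ha hb ha' hb'; rewrite adjE; have [c1 c2] := chk_c a b; have [h1 h2] := hv_c a' b'.
rewrite c1 c2 h1 h2 !modn_small // pm1_eo //.
have -> : (2 * a' == (2 * a).+1) = false by apply/negP; lia.
by rewrite eqn_mul2l /= orbF.
Qed.

Lemma adj_ev a b a' b' : (a < N)%N -> (b < N)%N -> (a' < N)%N -> (b' < N)%N ->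
  adj (chk a b) (ev a' b') = (a' == a) && ((b' == b) || (sN b' == b)).
Proof.
move=> ha hb ha' hb'; rewrite adjE; have [c1 c2] := chk_c a b; have [h1 h2] := ev_c a' b'.
rewrite c1 c2 h1 h2 !modn_small // pm1_oo // pm1_oe //.
by rewrite eqSS eqn_mul2l.
Qed.

Lemma hv_inj a b a' b' : (a < N)%N -> (b < N)%N -> (a' < N)%N -> (b' < N)%N ->
  hv a b = hv a' b' -> a = a' /\ b = b'.
Proof.
move=> ha hb ha' hb' e.
have [e1 e2] := hv_c a b; have [e1' e2'] := hv_c a' b'.
rewrite e !modn_small // in e1 e2 e1' e2'; lia.
Qed.
Lemma ev_inj a b a' b' : (a < N)%N -> (b < N)%N -> (a' < N)%N -> (b' < N)%N ->
  ev a b = ev a' b' -> a = a' /\ b = b'.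
Proof.
move=> ha hb ha' hb' e.
have [e1 e2] := ev_c a b; have [e1' e2'] := ev_c a' b'.
rewrite e !modn_small // in e1 e2 e1' e2'; lia.
Qed.
Lemma hv_ev a b a' b' : hv a b <> ev a' b'.
Proof.
move=> e; have [e1 _] := hv_c a b; have [e1' _] := ev_c a' b'.
rewrite e in e1; move: (a %% N) (a' %% N) e1 e1' => u u'; lia.
Qed.

Lemma nb_hv a b c : (a < N)%N -> (b < N)%N -> adj c (hv a b) -> c = chk a b \/ c = chk (pN a) b.
Proof.
move=> ha hb; have [a2 [b2 [ha2 hb2 ->]]] := CnodeP c.
rewrite adj_hv // => /andP [H /eqP eb]; subst b.
case/orP: H => /eqP e; first by left; rewrite e.
by right; rewrite e pN_sN.
Qed.

Lemma nb_ev a b c : (a < N)%N -> (b < N)%N -> adj c (ev a b) -> c = chk a b \/ c = chk a (sN b).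
Proof.
move=> ha hb; have [a2 [b2 [ha2 hb2 ->]]] := CnodeP c.
rewrite adj_ev // => /andP [/eqP ea H]; subst a.
by case/orP: H => /eqP e; [left | right]; rewrite e.
Qed.

Lemma nb_chk a b v : (a < N)%N -> (b < N)%N -> adj (chk a b) v ->
  [\/ v = hv a b, v = hv (sN a) b, v = ev a b | v = ev a (pN b)].
Proof.
move=> ha hb; have [a2 [b2 [ha2 hb2 [->|->]]]] := VnodeP v.
- rewrite adj_hv // => /andP [H /eqP eb]; subst b2.
  by case/orP: H => /eqP ->; [constructor 1 | constructor 2].
- rewrite adj_ev // => /andP [/eqP ea H]; subst a2.
  case/orP: H => /eqP e; first by constructor 3; rewrite e.
  by constructor 4; rewrite -e pN_sN.
Qed.

Lemma adj_hv1 a b : (a < N)%N -> (b < N)%N -> adj (chk a b) (hv a b).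
Proof. by move=> ha hb; rewrite adj_hv // !eqxx. Qed.
Lemma adj_hv2 a b : (a < N)%N -> (b < N)%N -> adj (chk (pN a) b) (hv a b).
Proof. by move=> ha hb; rewrite adj_hv ?pN_lt // sN_pN // !eqxx orbT. Qed.
Lemma adj_ev1 a b : (a < N)%N -> (b < N)%N -> adj (chk a b) (ev a b).
Proof. by move=> ha hb; rewrite adj_ev // !eqxx. Qed.
Lemma adj_ev2 a b : (a < N)%N -> (b < N)%N -> adj (chk a (sN b)) (ev a b).
Proof. by move=> ha hb; rewrite adj_ev ?sN_lt // !eqxx orbT. Qed.

Lemma chk_neq_p a b : (a < N)%N -> (b < N)%N -> chk a b != chk (pN a) b.
Proof.
move=> ha hb; apply/eqP => /chk_inj []; rewrite ?pN_lt // => e _.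
by move: (pN_neq ha); rewrite -e eqxx.
Qed.
Lemma chk_neq_s a b : (a < N)%N -> (b < N)%N -> chk a b != chk a (sN b).
Proof.
move=> ha hb; apply/eqP => /chk_inj []; rewrite ?sN_lt // => _ e.
by move: (sN_neq hb); rewrite -e eqxx.
Qed.

Lemma sN_small b : (b.+1 < N)%N -> sN b = b.+1.
Proof. by move=> h; rewrite /sN; case: eqP => // e; rewrite e ltnn in h. Qed.

End Geo.
Local Open Scope ring_scope.

Section Cyc.
Variables (n : nat) (F : fieldType) (x : Cnode n.+2 -> Vnode n.+2 -> F).
Hypothesis hx : is_labeling x.
Hypothesis hcyc : forall k (vs : 'I_k -> Vnode n.+2) (cs : 'I_k -> Cnode n.+2),
  is_cycle vs cs -> cycle_product x vs cs = 1.
Local Notation N := n.+2.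
Local Notation chk := (chk n).
Local Notation hv := (hv n).
Local Notation ev := (ev n).
Local Notation sN := (sN n).
Local Notation pN := (pN n).

Lemma xnz c v : adj c v -> x c v != 0. Proof. by rewrite hx. Qed.
Lemma x0 c v : ~~ adj c v -> x c v = 0.
Proof. by move=> h; apply/eqP; move: h; rewrite -hx negbK. Qed.

Lemma ordS_val (t : 'I_N) : (ordS t : nat) = sN t.
Proof.
have ht := ltn_ord t; rewrite /= /sN; case: ifP => [/eqP ->|h]; first by rewrite modnn.
rewrite modn_small //; lia.
Qed.

Lemma shift (g : nat -> F) : \prod_(t < N) g (sN t) = \prod_(t < N) g t.
Proof.
by rewrite [RHS](reindex_inj (@ordS_inj _)); apply: eq_bigr => t _; rewrite ordS_val.
Qed.

Definition T_e a b := x (chk a b) (ev a b) / x (chk a (sN b)) (ev a b).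
Fixpoint Rw a k := if k is k'.+1 then Rw a k' * T_e a k' else 1.
Definition T_h a := x (chk (pN a) 0) (hv a 0) / x (chk a 0) (hv a 0).
Fixpoint Yc k := if k is k'.+1 then Yc k' * T_h k'.+1 else 1.
Definition yy a b := Yc a * Rw a b.

Lemma Rw_prod a k : Rw a k = \prod_(t < k) T_e a t.
Proof. by elim: k => [|k IH]; rewrite ?big_ord0 // big_ord_recr /= IH. Qed.
Lemma Yc_prod k : Yc k = \prod_(t < k) T_h t.+1.
Proof. by elim: k => [|k IH]; rewrite ?big_ord0 // big_ord_recr /= IH. Qed.

Lemma row_loop a : (a < N)%N -> Rw a N = 1.
Proof.
move=> ha.
pose vs := fun t : 'I_N => ev a t. pose cs := fun t : 'I_N => chk a (sN t).
have hc : is_cycle vs cs.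
  split => //.
  - move=> t1 t2 /ev_inj [] // _ e; exact: val_inj.
  - move=> t1 t2; have h1 := ltn_ord t1; have h2 := ltn_ord t2.
    move=> /chk_inj [] //; try exact: sN_lt.
    move=> _ e; apply: val_inj; by rewrite /= -(pN_sN h1) e pN_sN.
  - move=> t; rewrite /vs /cs ordS_val adj_ev2 ?adj_ev1 //; exact: sN_lt.
have := hcyc hc; rewrite /cycle_product Rw_prod /T_e !prodf_div /cs /vs.
under eq_bigr do rewrite ordS_val.
by rewrite (shift (fun t => x (chk a t) (ev a t))).
Qed.

Lemma col_loop : Yc N = 1.
Proof.
pose vs := fun t : 'I_N => hv t 0. pose cs := fun t : 'I_N => chk t 0.
have hc : is_cycle vs cs.
  split => //.
  - move=> t1 t2 /hv_inj [] // e _; exact: val_inj.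
  - move=> t1 t2 /chk_inj [] // e _; exact: val_inj.
  - move=> t; rewrite /vs /cs ordS_val.
    apply/andP; split; first exact: adj_hv1.
    by have := adj_hv2 (sN_lt (ltn_ord t)) (isT : (0 < N)%N); rewrite pN_sN.
have := hcyc hc; rewrite /cycle_product Yc_prod /T_h !prodf_div /cs /vs.
under eq_bigr do rewrite ordS_val.
have e1 : forall t : 'I_N, chk (pN t.+1) 0 = chk t 0.
  by move=> t; rewrite /pN.
have e2 : forall t : 'I_N, hv t.+1 0 = hv (sN t) 0.
  move=> t; apply: hv_mod => //; rewrite sN_mod // modn_small //; exact: sN_lt.
have e3 : forall t : 'I_N, chk t.+1 0 = chk (sN t) 0.
  move=> t; apply: chk_mod => //; rewrite sN_mod // modn_small //; exact: sN_lt.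
move=> h; rewrite -[in RHS]h; congr (_ / _); first by apply: eq_bigr => i _; rewrite e1 e2.
rewrite -(shift (fun t => x (chk t 0) (hv t 0))).
by apply: eq_bigr => i _; rewrite e3 e2.
Qed.


Lemma chk_ne a b a2 b2 : (a < N)%N -> (b < N)%N -> (a2 < N)%N -> (b2 < N)%N ->
  (a != a2) || (b != b2) -> chk a b != chk a2 b2.
Proof. move=> ? ? ? ? h; apply/eqP => /chk_inj [] // e1 e2; by move: h; rewrite e1 e2 !eqxx. Qed.
Lemma hv_ne a b a2 b2 : (a < N)%N -> (b < N)%N -> (a2 < N)%N -> (b2 < N)%N ->
  (a != a2) || (b != b2) -> hv a b != hv a2 b2.
Proof. move=> ? ? ? ? h; apply/eqP => /hv_inj [] // e1 e2; by move: h; rewrite e1 e2 !eqxx. Qed.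
Lemma ev_ne a b a2 b2 : (a < N)%N -> (b < N)%N -> (a2 < N)%N -> (b2 < N)%N ->
  (a != a2) || (b != b2) -> ev a b != ev a2 b2.
Proof. move=> ? ? ? ? h; apply/eqP => /ev_inj [] // e1 e2; by move: h; rewrite e1 e2 !eqxx. Qed.
Lemma hv_ev_ne a b a2 b2 : hv a b != ev a2 b2.
Proof. by apply/eqP; apply: hv_ev. Qed.
Lemma ev_hv_ne a b a2 b2 : ev a b != hv a2 b2.
Proof. by apply/eqP => e; apply: (hv_ev (esym e)). Qed.

Lemma face a b : (a < N)%N -> (b < N)%N ->
  x (chk (pN a) b) (ev (pN a) b) / x (chk (pN a) b) (hv a b) *
  (x (chk (pN a) (sN b)) (hv a (sN b)) / x (chk (pN a) (sN b)) (ev (pN a) b) *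
  (x (chk a (sN b)) (ev a b) / x (chk a (sN b)) (hv a (sN b)) *
  (x (chk a b) (hv a b) / x (chk a b) (ev a b) * 1))) = 1.
Proof.
move=> ha hb.
have hpa := pN_lt ha; have hsb := sN_lt hb.
have npa : (pN a != a) by rewrite pN_neq.
have npa' : (a != pN a) by rewrite eq_sym pN_neq.
have nsb : (sN b != b) by rewrite sN_neq.
have nsb' : (b != sN b) by rewrite eq_sym sN_neq.
pose cs := tnth [tuple chk (pN a) b; chk (pN a) (sN b); chk a (sN b); chk a b].
pose vs := tnth [tuple hv a b; ev (pN a) b; hv a (sN b); ev a b].
have hc : is_cycle vs cs.
  split => //.
  - apply/tuple_uniqP; rewrite /= !inE !negb_or.
    by rewrite !hv_ev_ne !ev_hv_ne !hv_ne ?ev_ne ?nsb ?nsb' ?npa ?npa' ?orbT.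
  - apply/tuple_uniqP; rewrite /= !inE !negb_or.
    by rewrite !chk_ne ?nsb ?nsb' ?npa ?npa' ?orbT.
  - move=> [[|[|[|[|t]]]] ht] //; rewrite /vs /cs !(tnth_nth (hv a b)) !(tnth_nth (chk a b)) /=;
    by rewrite ?adj_hv1 ?adj_hv2 ?adj_ev1 ?adj_ev2.
have := hcyc hc; rewrite /cycle_product !big_ord_recl big_ord0 /vs /cs.
by rewrite !(tnth_nth (hv a b)) !(tnth_nth (chk a b)) /=.
Qed.


Lemma face_alg (A B C D E G H K Y0 Y1 : F) : A != 0 -> C != 0 -> E != 0 -> G != 0 -> H != 0 ->
  B/A * (D/C * (G/E * (K/H * 1))) = 1 -> Y1 * K = Y0 * A -> Y1 * (H/G) * E = Y0 * (B/C) * D.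
Proof.
move=> hA hC hE hG hH hf hy.
have hf' : B * D * G * K = A * C * E * H.
  have e : B/A * (D/C * (G/E * (K/H * 1))) * (A*C*E*H) = B * D * G * K.
    by field; rewrite hA hC hE hH.
  by rewrite -e hf mul1r.
have -> : Y0 = Y1 * K / A by rewrite hy mulfK.
rewrite [RHS](_ : _ = Y1 * (B*D*G*K) / (A*C*G)); last by field; rewrite hA hC hG.
rewrite hf'; field.
by rewrite hA hC hG.
Qed.


Lemma cons_ev a b : (a < N)%N -> (b < N)%N ->
  yy a b * x (chk a b) (ev a b) = yy a (sN b) * x (chk a (sN b)) (ev a b).
Proof.
move=> ha hb; have nz := xnz (adj_ev2 ha hb).
case: (ltnP b.+1 N) => hb1.
  have e : yy a (sN b) = yy a b * T_e a b by rewrite (sN_small hb1) /yy /= mulrA.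
  by rewrite e /yy /T_e -!mulrA mulVf // mulr1.
have eb : b = n.+1 by apply/eqP; rewrite eqn_leq -ltnS hb.
subst b.
have hr := row_loop ha; rewrite /= in hr.
have e0 : yy a (sN n.+1) = Yc a by rewrite /sN eqxx /yy /= mulr1.
rewrite e0.
have e : Rw a n.+1 * x (chk a n.+1) (ev a n.+1) = x (chk a (sN n.+1)) (ev a n.+1).
  by apply: (mulIf (invr_neq0 nz)); rewrite -mulrA hr mulfV.
by rewrite /yy -mulrA e.
Qed.

Lemma cons_hv a b : (a < N)%N -> (b < N)%N ->
  yy a b * x (chk a b) (hv a b) = yy (pN a) b * x (chk (pN a) b) (hv a b).
Proof.
move=> ha; elim: b => [|b IH] hb.
  case: a ha => [|a] ha.
    have hc := col_loop; rewrite /= /T_h in hc.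
    have e1 : chk N 0 = chk 0 0 by apply: chk_mod => //; rewrite modnn mod0n.
    have e2 : hv N 0 = hv 0 0 by apply: hv_mod => //; rewrite modnn mod0n.
    rewrite e1 e2 in hc.
    have nz : x (chk 0 0) (hv 0 0) != 0 by apply: xnz; apply: adj_hv1.
    have e : Yc n.+1 * x (chk (pN N) 0) (hv 0 0) = x (chk 0 0) (hv 0 0).
      by apply: (mulIf (invr_neq0 nz)); rewrite -mulrA hc mulfV.
    by rewrite /yy /= !mulr1 mul1r -e.
  have nz : x (chk a.+1 0) (hv a.+1 0) != 0 by apply: xnz; apply: adj_hv1.
  by rewrite /yy /= /T_h !mulr1 -mulrA divfK.
have hb' : (b < N)%N by apply: ltnW.
have IH' := IH hb'.
have hpa := pN_lt ha.
have e1 : yy a b.+1 = yy a b * T_e a b by rewrite /yy /= mulrA.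
have e2 : yy (pN a) b.+1 = yy (pN a) b * T_e (pN a) b by rewrite /yy /= mulrA.
have hf := face ha hb'.
have ss := sN_small hb.
rewrite ss in hf.
rewrite e1 e2 /T_e ss; apply: face_alg hf IH'; apply: xnz.
- exact: adj_hv2.
- by rewrite -ss; apply: adj_ev2.
- exact: adj_hv1.
- by rewrite -ss; apply: adj_ev2.
- exact: adj_ev1.
Qed.

Definition yC (c : Cnode N) := yy ((val c).1 ./2) ((val c).2 ./2).
Lemma yC_chk a b : (a < N)%N -> (b < N)%N -> yC (chk a b) = yy a b.
Proof.
move=> ha hb; rewrite /yC; have [e1 e2] := @chk_c n a b; rewrite e1 e2 !modn_small //.
congr yy; lia.
Qed.

Lemma sum_two (f : Cnode N -> F) c1 c2 : c1 != c2 ->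
  (forall c, c != c1 -> c != c2 -> f c = 0) -> \sum_c f c = f c1 + f c2.
Proof.
move=> ne h; rewrite (bigD1 c1) //= (bigD1 c2) 1?eq_sym //= big1 ?addr0 //.
by move=> c /andP [hc1 hc2]; apply: h.
Qed.

Hypothesis h2 : (2%:R : F) = 0.

Lemma ker_y v : \sum_c x c v * yC c = 0.
Proof.
have [a [b [ha hb [->|->]]]] := VnodeP v.
- rewrite (@sum_two _ (chk a b) (chk (pN a) b)); [| exact: chk_neq_p | ].
    rewrite !yC_chk ?pN_lt // mulrC [x (chk (pN a) b) _ * _]mulrC cons_hv //.
    by rewrite -mulr2n -mulr_natr h2 mulr0.
  move=> c n1 n2; rewrite x0 ?mul0r //; apply/negP => /nb_hv [] // e.
    by rewrite e eqxx in n1.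
  by rewrite e eqxx in n2.
- rewrite (@sum_two _ (chk a b) (chk a (sN b))); [| exact: chk_neq_s | ].
    rewrite !yC_chk ?sN_lt // mulrC [x (chk a (sN b)) _ * _]mulrC cons_ev //.
    by rewrite -mulr2n -mulr_natr h2 mulr0.
  move=> c n1 n2; rewrite x0 ?mul0r //; apply/negP => /nb_ev [] // e.
    by rewrite e eqxx in n1.
  by rewrite e eqxx in n2.
Qed.

Lemma yC0 : yC (chk 0 0) != 0.
Proof. by rewrite yC_chk // /yy /= mulr1 oner_neq0. Qed.

End Cyc.
Local Open Scope ring_scope.

Section Tree.
Variables (n : nat) (F : fieldType) (x : Cnode n.+2 -> Vnode n.+2 -> F).
Hypothesis hx : is_labeling x.
Local Notation N := n.+2.
Local Notation chk := (chk n).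
Local Notation hv := (hv n).
Local Notation ev := (ev n).
Local Notation sN := (sN n).
Local Notation pN := (pN n).

Definition TT := (('I_N * 'I_n.+1) + 'I_n.+1)%type.

Definition tval (u : {ffun TT -> F^o}) (v : Vnode N) : F :=
  let i := ((val v).1 : nat) in let j := ((val v).2 : nat) in
  if odd i then (if (j./2 < n.+1)%N then u (inl (inord (i./2), inord (j./2))) else 0)
  else (if (j./2 == 0) && (0 < i./2)%N then u (inr (inord (i./2).-1)) else 0).
Definition tw (u : {ffun TT -> F^o}) : {ffun Vnode N -> F^o} := [ffun v => tval u v].
Lemma tw_lin : linear tw.
Proof.
move=> a u w; apply/ffunP => v; rewrite !ffunE /tval.
by case: ifP => _; case: ifP => _; rewrite ?ffunE //= scaler0 addr0.
Qed.
HB.instance Definition _ := GRing.isLinear.Build F _ _ _ tw tw_lin.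

Lemma tw_ev u a b : (a < N)%N -> (b < N)%N ->
  tw u (ev a b) = if (b < n.+1)%N then u (inl (inord a, inord b)) else 0.
Proof.
move=> ha hb; rewrite ffunE /tval; have [e1 e2] := @ev_c n a b; rewrite e1 e2 !modn_small //.
have -> : odd (2 * a).+1 by lia.
have -> : ((2 * a).+1)./2 = a by lia.
by have -> : ((2 * b).+1)./2 = b by lia.
Qed.

Lemma tw_hv u a b : (a < N)%N -> (b < N)%N ->
  tw u (hv a b) = if (b == 0) && (0 < a)%N then u (inr (inord a.-1)) else 0.
Proof.
move=> ha hb; rewrite ffunE /tval; have [e1 e2] := @hv_c n a b; rewrite e1 e2 !modn_small //.
have -> : odd (2 * a) = false by lia.
have -> : (2 * a)./2 = a by lia.
by have -> : (2 * b)./2 = b by lia.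
Qed.

Lemma xnz' c v : adj c v -> x c v != 0. Proof. by rewrite hx. Qed.
Lemma x0' c v : ~~ adj c v -> x c v = 0.
Proof. by move=> h; apply/eqP; move: h; rewrite -hx negbK. Qed.

Lemma sum_one (c : Cnode N) (v0 : Vnode N) (w : Vnode N -> F) :
  (forall v, v != v0 -> adj c v -> w v = 0) -> \sum_v x c v * w v = x c v0 * w v0.
Proof.
move=> h; rewrite (bigD1 v0) //= big1 ?addr0 // => v hv0.
case: (boolP (adj c v)) => hadj; first by rewrite h ?mulr0.
by rewrite x0' ?mul0r.
Qed.

Lemma tw_inj u : syndrome x (tw u) = 0 -> u = 0.
Proof.
move=> H.
have hs c : \sum_v x c v * tw u v = 0.
  by have := congr1 (fun f : {ffun Cnode N -> F^o} => f c) H; rewrite !ffunE.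
have row a : (a < N)%N -> forall k, (k <= n.+1)%N -> tw u (ev a (n.+1 - k)) = 0.
  move=> ha; elim => [|k IH] hk.
    by rewrite subn0 tw_ev // ltnn.
  have hkn : (k <= n.+1)%N by apply: ltnW.
  have IH' := IH hkn.
  set b := (n.+1 - k.+1)%N.
  have eb : (n.+1 - k = b.+1)%N by rewrite /b; lia.
  rewrite eb in IH'.
  have hbN : (b.+1 < N)%N by rewrite /b; lia.
  have hb : (b < N)%N by apply: ltnW.
  have := hs (chk a b.+1).
  rewrite (@sum_one _ (ev a b)).
    have hadj : adj (chk a b.+1) (ev a b) by rewrite -(sN_small hbN); apply: adj_ev2.
    by move/eqP; rewrite mulf_eq0 (negbTE (xnz' hadj)) /= => /eqP.
  clearbody b; move=> v nv /nb_chk [] // e; rewrite e in nv *; rewrite ?IH' ?tw_hv ?tw_ev ?sN_lt //.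
  by rewrite /pN /= eqxx in nv.
have row_all a b : (a < N)%N -> (b < N)%N -> tw u (ev a b) = 0.
  move=> ha hb; have := row a ha (n.+1 - b)%N (leq_subr _ _).
  by rewrite subKn //; rewrite -ltnS.
have col_step a : (0 < a)%N -> (a < N)%N -> tw u (hv (sN a) 0) = 0 -> tw u (hv a 0) = 0.
  move=> a0 ha hs'.
  have := hs (chk a 0).
  rewrite (@sum_one _ (hv a 0)).
    have hadj : adj (chk a 0) (hv a 0) by apply: adj_hv1.
    by move/eqP; rewrite mulf_eq0 (negbTE (xnz' hadj)) /= => /eqP.
  move=> v nv /nb_chk [] // e; rewrite e in nv *; rewrite ?row_all ?pN_lt //.
  by rewrite eqxx in nv.
have col k : (k <= n)%N -> tw u (hv (n.+1 - k) 0) = 0.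
  elim: k => [|k IH] hk.
    rewrite subn0; apply: col_step => //.
    by rewrite /sN eqxx tw_hv.
  have IH' := IH (ltnW hk).
  apply: col_step; try lia.
  by rewrite sN_small; [have -> : (n.+1 - k.+1).+1 = (n.+1 - k)%N by lia | lia].
apply/ffunP => t; rewrite ffunE; case: t => [[p q]|q].
  have := row_all p q (ltn_ord p) (leq_trans (ltn_ord q) (leqnSn _)).
  by rewrite tw_ev // ?ltn_ord ?(leq_trans (ltn_ord q) (leqnSn _)) // !inord_val.
have hq := ltn_ord q.
have := col (n - q)%N (leq_subr _ _).
have -> : (n.+1 - (n - q) = q.+1)%N by lia.
by rewrite tw_hv //= inord_val.
Qed.

End Tree.
Local Open Scope ring_scope.

Lemma syndrome_lin (F : fieldType) n (x : Cnode n -> Vnode n -> F) : linear (syndrome x).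
Proof.
move=> a u w; apply/ffunP=> c; rewrite !ffunE.
rewrite scaler_sumr -big_split /=; apply: eq_bigr=> v _; rewrite !ffunE.
by rewrite mulrDr mulrCA.
Qed.
HB.instance Definition _ (F : fieldType) n (x : Cnode n -> Vnode n -> F) :=
  GRing.isLinear.Build F _ _ _ (syndrome x) (syndrome_lin x).

Definition phiy (F : fieldType) (C : finType) (y : C -> F) (z : {ffun C -> F^o}) : F^o := \sum_c y c * z c.
Lemma phiy_lin (F : fieldType) (C : finType) (y : C -> F) : linear (phiy y).
Proof.
move=> a u w; rewrite /phiy scaler_sumr -big_split /=; apply: eq_bigr=> c _.
by rewrite !ffunE mulrDr mulrCA.
Qed.
HB.instance Definition _ (F : fieldType) (C : finType) (y : C -> F) :=
  GRing.isLinear.Build F _ _ _ (phiy y) (phiy_lin y).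

Lemma dim_code_gen (F : fieldType) n (x : Cnode n -> Vnode n -> F) (T : finType)
  (y : Cnode n -> F) (c0 : Cnode n) (hy0 : y c0 != 0)
  (hy : forall v, \sum_c x c v * y c = 0)
  (h : {linear {ffun T -> F^o} -> {ffun Vnode n -> F^o}})
  (hinj : forall u, syndrome x (h u) = 0 -> u = 0) (hT : #|T| = (#|{: Cnode n}|).-1) :
  \dim (lker (linfun (syndrome x))) = (#|{: Vnode n}| - (#|{: Cnode n}|).-1)%N.
Proof.
have dV : \dim (fullv : {vspace {ffun Vnode n -> F^o}}) = #|{: Vnode n}|.
  by rewrite dimvf /dim /= muln1.
have dC : \dim (fullv : {vspace {ffun Cnode n -> F^o}}) = #|{: Cnode n}|.
  by rewrite dimvf /dim /= muln1.
have dT : \dim (fullv : {vspace {ffun T -> F^o}}) = #|T|.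
  by rewrite dimvf /dim /= muln1.
set L := linfun (syndrome x).
have := limg_ker_dim L fullv; rewrite capfv dV => eK.
suff e : \dim (limg L) = (#|{: Cnode n}|).-1 by rewrite -eK e addnK.
apply/eqP; rewrite eqn_leq; apply/andP; split.
- set P := linfun (phiy y).
  have sub : (limg L <= lker P)%VS.
    apply/subvP=> z /memv_imgP [w _ ->].
    rewrite memv_ker !lfunE /= /phiy.
    under eq_bigr do rewrite !ffunE big_distrr /=.
    rewrite exchange_big /= big1 // => v _.
    rewrite (eq_bigr (fun c => w v * (x c v * y c))); first by rewrite -big_distrr /= hy mulr0.
    by move=> c _; rewrite mulrCA mulrA [w v * _]mulrC -mulrA mulrCA.
  apply: leq_trans (dimvS sub) _.
  have := limg_ker_dim P fullv; rewrite capfv dC => eP.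
  have : (0 < \dim (limg P))%N.
    rewrite lt0n dimv_eq0; apply/eqP => e0.
    have : P [ffun c => (c == c0)%:R] \in limg P by apply: memv_img; apply: memvf.
    rewrite e0 memv0 lfunE /= /phiy (bigD1 c0) //= big1 ?addr0 ?ffunE ?eqxx ?mulr1.
      by apply/negP; rewrite hy0.
    by move=> c hc; rewrite ffunE (negbTE hc) mulr0.
  rewrite -eP. case: (\dim (limg P)) => // k _; rewrite addnS /=; lia.
- rewrite -hT -dT.
  have : (lker (L \o linfun h) == 0)%VS.
    apply/lker0P => u1 u2 e.
    apply/eqP; rewrite -subr_eq0; apply/eqP; apply: hinj.
    move: e; rewrite !comp_lfunE /L. rewrite !(lfunE (syndrome x : {linear _ -> _})) /= !lfunE /= => e.
    by rewrite linearB /= linearB /= e subrr.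
  move=> /eqP k0; have := limg_ker_dim (L \o linfun h)%VF fullv.
  rewrite k0 capv0 dimv0 add0n => <-.
  by rewrite limg_comp; apply: dimvS; apply: limgS; apply: subvf.
Qed.

Lemma card_C n : #|{: Cnode n.+2}| = (n.+2 * n.+2)%N.
Proof.
pose f := fun p : 'I_n.+2 * 'I_n.+2 => chk n p.1 p.2.
have fi : injective f.
  move=> [p1 p2] [q1 q2] /chk_inj [] // e1 e2.
  by congr pair; apply: val_inj.
have -> : (n.+2 * n.+2)%N = #|{: 'I_n.+2 * 'I_n.+2}| by rewrite card_prod card_ord.
rewrite -(card_codom fi).
apply: eq_card => c; apply/esym/codomP.
have [a [b [ha hb ->]]] := CnodeP c.
by exists (Ordinal ha, Ordinal hb).
Qed.

Lemma card_V n : #|{: Vnode n.+2}| = (2 * (n.+2 * n.+2))%N.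
Proof.
pose f := fun p : bool * ('I_n.+2 * 'I_n.+2) =>
  if p.1 then hv n p.2.1 p.2.2 else ev n p.2.1 p.2.2.
have fi : injective f.
  move=> [[|] [p1 p2]] [[|] [q1 q2]]; rewrite /f /=.
  - by move=> /hv_inj [] // e1 e2; congr (_, (_, _)); apply: val_inj.
  - by move=> /hv_ev.
  - by move=> e; case: (hv_ev (esym e)).
  - by move=> /ev_inj [] // e1 e2; congr (_, (_, _)); apply: val_inj.
have -> : (2 * (n.+2 * n.+2))%N = #|{: bool * ('I_n.+2 * 'I_n.+2)}| by rewrite !card_prod card_bool card_ord.
rewrite -(card_codom fi).
apply: eq_card => v; apply/esym/codomP.
have [a [b [ha hb [->|->]]]] := VnodeP v.
  by exists (true, (Ordinal ha, Ordinal hb)).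
by exists (false, (Ordinal ha, Ordinal hb)).
Qed.

Lemma card_TT n : #|{: TT n}| = (n.+2 * n.+2).-1.
Proof. rewrite /TT card_sum card_prod !card_ord; lia. Qed.

Theorem lemma4 (F : finFieldType) (m n : nat) (hn : (2 <= n)%N)
  (hq : #|F| = (2 ^ m)%N)
  (x : Cnode n -> Vnode n -> F) (hx : is_labeling x)
  (hcyc : forall (k : nat) (vs : 'I_k -> Vnode n) (cs : 'I_k -> Cnode n),
      is_cycle vs cs -> cycle_product x vs cs = 1%R) :
  \dim (codeX x) = (n ^ 2 + 1)%N.
Proof.
case: n hn x hx hcyc => [|[|n]] // _ x hx hcyc.
have h2 : (2%:R : F) = 0 by apply: pcharf0; apply: (card_finPcharP hq).
rewrite /codeX (dim_code_gen (yC0 x) (ker_y hx hcyc h2) (tw_inj hx)).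
  rewrite card_V card_C; lia.
by rewrite card_TT card_C.
Qed.
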